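(* Let $(p_\omega)_{\omega\in\Omega}$ be a fixed probability distribution on the finite scenario set $\Omega$, and $\Phi_N(\mathbf{x})=\sum_{\omega\in\Omega}p_\omega Q_\omega(\mathbf{x})$. Let $\hat{\mathbf{x}}\in\mathcal{X}$ and for each $\omega\in\Omega$ let $\hat{\mathbf{S}}^\omega=(\hat S^\omega_1,\dots,\hat S^\omega_k)$ be an optimal solution of the problem defining $Q_\omega(\hat{\mathbf{x}})$. For each $\omega,q$ fix an ordering $\hat S^\omega_q=\{i^\omega_{q,1},\dots,i^\omega_{q,T^\omega_q}\}$ and for $1\le t\le T^\omega_q$ let $\hat{\mathbf{S}}^\omega_{q,(t)}=(\hat S^\omega_1,\dots,\hat S^\omega_{q-1},\{i^\omega_{q,1},\dots,i^\omega_{q,t-1}\},\emptyset,\dots,\emptyset)$. Then for every $\mathbf{x}\in\mathcal{X}$, $$\Phi_N(\mathbf{x})\;\ge\;\Phi_N(\hat{\mathbf{x}})-\sum_{q=1}^k\sum_{\omega\in\Omega}\sum_{t=1}^{T^\omega_q}p_\omega\,\rho^\omega_{q,i^\omega_{q,t}}(\hat{\mathbf{S}}^\omega_{q,(t)})\,\xi^\omega_{i^\omega_{q,t}}\,x_{q,i^\omega_{q,t}}.$$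
   Context: Let $n,k$ be positive integers and $N=\{1,\dots,n\}$. $\mathbb{X}(N,k)$ denotes the set of $k$-tuples $\mathbf{S}=(S_1,\dots,S_k)$ of pairwise disjoint subsets of $N$; such a tuple is identified with $\mathbf{s}\in\{0,1\}^{kn}$ where $s_{q,i}=1$ iff $i\in S_q$. For $\mathbf{X},\mathbf{Y}\in\mathbb{X}(N,k)$ let $\mathbf{X}\sqcap\mathbf{Y}=(X_1\cap Y_1,\dots,X_k\cap Y_k)$ and $\mathbf{X}\sqcup\mathbf{Y}$ be the tuple whose $i$-th component is $(X_i\cup Y_i)\setminus\bigcup_{q\ne i}(X_q\cup Y_q)$. A function $f:\mathbb{X}(N,k)\to\mathbb{R}$ is $k$-submodular if $f(\mathbf{X})+f(\mathbf{Y})\ge f(\mathbf{X}\sqcap\mathbf{Y})+f(\mathbf{X}\sqcup\mathbf{Y})$ for all $\mathbf{X},\mathbf{Y}$, and monotone if $f(\mathbf{X})\le f(\mathbf{Y})$ whenever $X_q\subseteq Y_q$ for all $q$. $\boldsymbol{\emptyset}=(\emptyset,\dots,\emptyset)$. Given nonnegative integer budgets $A_1,\dots,A_k$ and $D_1,\dots,D_k$, the attacker's feasible set is $\mathcal{X}=\{\mathbf{x}\in\{0,1\}^{kn}:\sum_{i=1}^n x_{q,i}\le A_q\ \forall q,\ \sum_{q=1}^k x_{q,i}\le 1\ \forall i\in N\}$. Stochastic setting: $\Omega$ is a finite set of scenarios; for each $\omega\in\Omega$ we are given $\xi^\omega\in\{0,1\}^n$ and a monotone $k$-submodular function $f^\omega:\mathbb{X}(N,k)\to\mathbb{R}$,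 with marginal gains $\rho^\omega_{q,i}(\mathbf{X})=f^\omega(X_1,\dots,X_q\cup\{i\},\dots,X_k)-f^\omega(\mathbf{X})$ for $i\notin\bigcup_r X_r$. For $\mathbf{x}\in\mathcal{X}$, $Q_\omega(\mathbf{x})=\max\{f^\omega(\mathbf{S}):\mathbf{S}\in\mathbb{X}(N,k),\ s_{q,i}\le 1-x_{q,i}\xi^\omega_i\ \forall q,i,\ \sum_{i=1}^n s_{q,i}\le D_q\ \forall q\}$. *)

(* Defs.v *)
From HB Require Import structures.
From mathcomp Require Import all_boot all_order all_algebra.
Set Implicit Arguments. Unset Strict Implicit. Unset Printing Implicit Defensive.
Import Order.TTheory GRing.Theory Num.Theory.
Local Open Scope ring_scope.

(* Ground set N = 'I_n, types 'I_k.  A k-tuple of subsets of N is a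
   {ffun 'I_k -> {set 'I_n}}; it belongs to X(N,k) iff pairwise disjoint. *)
Definition ktuple (n k : nat) := {ffun 'I_k -> {set 'I_n}}.

Definition kdisj (n k : nat) (S : ktuple n k) : bool :=
  [forall q : 'I_k, forall r : 'I_k, (q != r) ==> [disjoint S q & S r]].

Definition kempty (n k : nat) : ktuple n k := [ffun _ => set0].

Definition kmeet (n k : nat) (X Y : ktuple n k) : ktuple n k :=
  [ffun i => X i :&: Y i].

Definition kjoin (n k : nat) (X Y : ktuple n k) : ktuple n k :=
  [ffun i => (X i :|: Y i) :\: \bigcup_(q | q != i) (X q :|: Y q)].

Definition ksubmodular (R : realFieldType) (n k : nat) (f : ktuple n k -> R) :=
  forall X Y : ktuple n k, kdisj X -> kdisj Y ->
    f (kmeet X Y) + f (kjoin X Y) <= f X + f Y.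

Definition kmonotone (R : realFieldType) (n k : nat) (f : ktuple n k -> R) :=
  forall X Y : ktuple n k, kdisj X -> kdisj Y ->
    (forall q, X q \subset Y q) -> f X <= f Y.

Definition kmarg (R : realFieldType) (n k : nat) (f : ktuple n k -> R)
  (q : 'I_k) (i : 'I_n) (X : ktuple n k) : R :=
  f [ffun r => if r == q then i |: X r else X r] - f X.

Definition attack_feasible (n k : nat) (A : 'I_k -> nat)
  (x : 'I_k -> 'I_n -> bool) : Prop :=
  (forall q, #|[set i | x q i]| <= A q)%N /\
  (forall i, #|[set q | x q i]| <= 1)%N.

Definition follower_feasible (n k : nat) (D : 'I_k -> nat)
  (xi : 'I_n -> bool) (x : 'I_k -> 'I_n -> bool) (S : ktuple n k) : bool :=
  kdisj S &&
  [forall q : 'I_k, forall i : 'I_n, (i \in S q) ==> ~~ (x q i && xi i)] &&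
  [forall q : 'I_k, #|S q| <= D q]%N.

(* Q_omega(x) = max of f over feasible S (the empty tuple is feasible) *)
Definition Qval (R : realFieldType) (n k : nat) (D : 'I_k -> nat)
  (xi : 'I_n -> bool) (f : ktuple n k -> R) (x : 'I_k -> 'I_n -> bool) : R :=
  \big[Num.max/f (kempty n k)]_(S : ktuple n k | follower_feasible D xi x S) f S.

Definition optimal (R : realFieldType) (n k : nat) (D : 'I_k -> nat)
  (xi : 'I_n -> bool) (f : ktuple n k -> R) (x : 'I_k -> 'I_n -> bool)
  (S : ktuple n k) : Prop :=
  follower_feasible D xi x S /\
  forall S', follower_feasible D xi x S' -> f S' <= f S.

Definition PhiN (R : realFieldType) (Omega : finType) (n k : nat)
  (p : Omega -> R) (D : 'I_k -> nat) (xi : Omega -> 'I_n -> bool)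
  (f : Omega -> ktuple n k -> R) (x : 'I_k -> 'I_n -> bool) : R :=
  \sum_(w : Omega) p w * Qval D (xi w) (f w) x.

(* hat S_{q,(t)} with 0-based t: (S_1,...,S_{q-1}, first t elements of the
   ordering of S_q, empty, ..., empty) *)
Definition prefix_tuple (n k : nat) (S : ktuple n k) (q : 'I_k)
  (s : seq 'I_n) (t : nat) : ktuple n k :=
  [ffun r : 'I_k => if (r < q)%N then S r
                    else if r == q then [set i in take t s] else set0].

(* Main.v *)
Require Import Defs.
From HB Require Import structures.
From mathcomp Require Import all_boot all_order all_algebra.
From mathcomp Require Import lra zify.
Import Order.TTheory GRing.Theory Num.Theory.
Local Open Scope ring_scope.

Definition kadd (n k : nat) (T : ktuple n k) (q : 'I_k) (i : 'I_n) : ktuple n k :=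
  [ffun r => if r == q then i |: T r else T r].
Definition filt (n k : nat) (K : 'I_k -> 'I_n -> bool) (T : ktuple n k) : ktuple n k :=
  [ffun r => [set j in T r | K r j]].
Arguments kadd {n k}.
Arguments filt {n k}.

Lemma kdisjP n k (T : ktuple n k) :
  reflect (forall r r' j, r != r' -> j \in T r -> j \in T r' -> False) (kdisj T).
Proof.
apply: (iffP forallP) => [H r r' j nrr jr jr'|H r].
  have /forallP/(_ r')/implyP/(_ nrr) := H r.
  by move/disjointFr/(_ jr); rewrite jr'.
apply/forallP => r'; apply/implyP => nrr.
rewrite disjoint_subset; apply/subsetP => j jr; rewrite inE; apply/negP => jr'.
exact: (H r r' j).
Qed.

Lemma kdisj_sub n k (S T : ktuple n k) :
  kdisj S -> (forall r, T r \subset S r) -> kdisj T.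
Proof.
move=> /kdisjP HS sub; apply/kdisjP => r r' j nrr jr jr'.
apply: (HS r r' j nrr); [exact: (subsetP (sub r)) | exact: (subsetP (sub r'))].
Qed.

Lemma submod_marg (R : realFieldType) n k (f : ktuple n k -> R) q i
  (X Y : ktuple n k) :
  ksubmodular f -> kdisj Y -> (forall r, X r \subset Y r) ->
  (forall r, i \notin Y r) -> kmarg f q i Y <= kmarg f q i X.
Proof.
move=> fsub dY XY iY.
have dY' := dY; move/kdisjP: dY' => dYP.
set X' := kadd X q i.
have dX' : kdisj X'.
  apply/kdisjP => r r' j; rewrite /X' !ffunE.
  have hX : forall s, j \in X s -> j \in Y s by move=> s; apply/subsetP.
  case: (r =P q) => [->|_]; case: (r' =P q) => [->|_];
    rewrite ?in_setU1; first by rewrite eqxx.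
  - move=> nrr; case/orP => [/eqP ->|/hX jr] jr'; first by move: (iY r'); rewrite (subsetP (XY r') _ jr').
    by move/hX: jr'; apply: dYP jr.
  - move=> nrr jr; case/orP => [/eqP jE|/hX jr']; last by apply: dYP (hX _ jr) jr'.
    by move: (iY r); rewrite -jE (hX _ jr).
  - by move=> nrr /hX jr /hX jr'; apply: dYP jr jr'.
have hm : kmeet X' Y = X.
  apply/ffunP => r; rewrite !ffunE; apply/setP => j; rewrite !inE.
  case: (r =P q) => _; rewrite ?inE.
    case: (j =P i) => [->|_] /=; last by rewrite andb_idr //; apply/subsetP.
    rewrite (negbTE (iY r)) /=; apply/esym/negP => /(subsetP (XY r)).
    by rewrite (negbTE (iY r)).
  by rewrite andb_idr //; apply/subsetP.
have hj : kjoin X' Y = kadd Y q i.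
  have hU : forall s, X' s :|: Y s = if s == q then i |: Y s else Y s.
    move=> s; rewrite /X' ffunE; case: (s == q).
      by rewrite -setUA (setUidPr (XY s)).
    exact: (setUidPr (XY s)).
  apply/ffunP => r; rewrite [kjoin _ _ _]ffunE hU [kadd Y _ _ _]ffunE; apply/setP => j; rewrite !inE.
  apply/andb_idl => jr; apply/negP => /bigcupP -[s /= nsr]; rewrite hU => js.
  have jr' : (j == i) || (j \in Y r) by move: jr; case: (r == q); rewrite ?inE => // ->; rewrite orbT.
  case: (s =P q) js => [sq|_] js.
    move: js; rewrite in_setU1 => /orP[/eqP ji|js].
      case: (r =P q) jr => [rq|_] jr; first by move: nsr; rewrite rq sq eqxx.
      by move: jr; rewrite ji (negbTE (iY r)).
    case/orP: jr' => [/eqP ji|jr']; first by move: js; rewrite ji (negbTE (iY s)).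
    by apply: (dYP s r j nsr js jr').
  case/orP: jr' => [/eqP ji|jr']; first by move: js; rewrite ji (negbTE (iY s)).
  by apply: (dYP s r j nsr js jr').
have := fsub X' Y dX' dY; rewrite hm hj /kmarg /X' /kadd.
move=> h; lra.
Qed.

Lemma filt_add n k (K : 'I_k -> 'I_n -> bool) (T : ktuple n k) q i :
  filt K (kadd T q i) = if K q i then kadd (filt K T) q i else filt K T.
Proof.
apply/ffunP => r; case Kqi: (K q i); rewrite !ffunE;
  case: (r =P q) => [->|_] //; apply/setP => j; rewrite !inE //.
  by case: (j =P i) => [->|] //=; rewrite Kqi.
by case: (j =P i) => [->|] //=; rewrite Kqi andbF.
Qed.

Lemma filt_sub n k (K : 'I_k -> 'I_n -> bool) (T : ktuple n k) r :
  filt K T r \subset T r.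
Proof. by apply/subsetP => j; rewrite ffunE inE => /andP[]. Qed.

Lemma Ysub n k (S : ktuple n k) (s : 'I_k -> seq 'I_n) q t r :
  [set i in s q] = S q -> prefix_tuple S q (s q) t r \subset S r.
Proof.
move=> hs; rewrite ffunE; case: (r < q)%N => //.
case: (r =P q) => [->|_]; last exact: sub0set.
by rewrite -hs; apply/subsetP => j; rewrite !inE; apply: mem_take.
Qed.

Lemma Yfresh n k (S : ktuple n k) (s : 'I_k -> seq 'I_n) q t r i0 :
  kdisj S -> uniq (s q) -> [set i in s q] = S q -> (t < size (s q))%N ->
  nth i0 (s q) t \notin prefix_tuple S q (s q) t r.
Proof.
move=> /kdisjP dS us hs ts; have iin := mem_nth i0 ts.
rewrite ffunE; case: ltnP => [rq|qr].
  apply/negP => ir; apply: (dS r q _ _ ir); last by rewrite -hs inE.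
  by rewrite -val_eqE /= ltn_eqF.
case: (r =P q) => [_|_]; last by rewrite inE.
by rewrite inE in_take // index_uniq // ltnn.
Qed.

Lemma Ystep n k (S : ktuple n k) (s : 'I_k -> seq 'I_n) q t i0 :
  (t < size (s q))%N ->
  prefix_tuple S q (s q) t.+1 = kadd (prefix_tuple S q (s q) t) q (nth i0 (s q) t).
Proof.
move=> ts; apply/ffunP => r; rewrite !ffunE.
case: ltnP => [rq|qr].
  by have -> : (r == q) = false by rewrite -val_eqE /= ltn_eqF.
case: (r =P q) => // _; rewrite (take_nth i0 ts).
by apply/setP => j; rewrite !inE mem_rcons in_cons.
Qed.

Lemma Ybound n k (S : ktuple n k) (s : 'I_k -> seq 'I_n) (q q' : 'I_k) :
  [set i in s q] = S q -> val q' = (val q).+1 ->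
  prefix_tuple S q (s q) (size (s q)) = prefix_tuple S q' (s q') 0.
Proof.
move=> hs hq; apply/ffunP => r; rewrite !ffunE take_size take0 hq.
rewrite -!val_eqE /= hq.
case: (ltngtP r q) => [rq|qr|rq].
- by rewrite ltnS ltnW.
- rewrite ltnS leqNgt qr /=.
  by case: (_ == _) => //; apply/setP => j; rewrite !inE.
- by rewrite ltnS rq leqnn hs; congr (S _); exact: val_inj.
Qed.

Lemma Yzero n k (S : ktuple n k) (s : 'I_k -> seq 'I_n) (q : 'I_k) :
  val q = 0%N -> prefix_tuple S q (s q) 0 = kempty n k.
Proof.
move=> hq; apply/ffunP => r; rewrite !ffunE hq ltn0 take0.
by case: eqP => // _; apply/setP => j; rewrite !inE.
Qed.

Lemma Ylast n k (S : ktuple n k) (s : 'I_k -> seq 'I_n) (q : 'I_k) :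
  [set i in s q] = S q -> val q = k.-1 ->
  prefix_tuple S q (s q) (size (s q)) = S.
Proof.
move=> hs hq; apply/ffunP => r; rewrite !ffunE take_size.
case: ltnP => // qr.
have rq : r = q.
  apply: val_inj; apply/eqP; rewrite eqn_leq qr andbT.
  have hq' : nat_of_ord q = k.-1 := hq.
  have := ltn_ord r; rewrite /=; lia.
by rewrite rq eqxx hs.
Qed.

Lemma filt_empty n k (K : 'I_k -> 'I_n -> bool) : filt K (kempty n k) = kempty n k.
Proof. by apply/ffunP => r; rewrite !ffunE; apply/setP => j; rewrite !inE. Qed.

Lemma sum_succ (R : realFieldType) k (T : 'I_k -> R) m (Hm : (m < k)%N) :
  \sum_(q : 'I_k | (q < m.+1)%N) T q = T (Ordinal Hm) + \sum_(q : 'I_k | (q < m)%N) T q.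
Proof.
rewrite (bigD1 (Ordinal Hm)) //=; congr (_ + _); apply: eq_bigl => q.
by rewrite -val_eqE /= ltnS ltn_neqAle andbC.
Qed.

Lemma scen (R : realFieldType) n k (g : ktuple n k -> R) (S : ktuple n k)
  (s : 'I_k -> seq 'I_n) (K : 'I_k -> 'I_n -> bool) (i0 : 'I_n) :
  (0 < k)%N -> ksubmodular g -> kdisj S ->
  (forall q, uniq (s q) /\ [set i in s q] = S q) ->
  g S - g (filt K S) <= \sum_(q : 'I_k) \sum_(0 <= j < size (s q))
   kmarg g q (nth i0 (s q) j) (prefix_tuple S q (s q) j) * (~~ K q (nth i0 (s q) j))%:R.
Proof.
move=> k0 gs dS hs.
pose Y q t := prefix_tuple S q (s q) t.
pose D q t := g (Y q t) - g (filt K (Y q t)).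
pose term q j := kmarg g q (nth i0 (s q) j) (Y q j) * (~~ K q (nth i0 (s q) j))%:R.
pose T q := \sum_(0 <= j < size (s q)) term q j.
have step : forall q t, (t < size (s q))%N -> D q t.+1 <= D q t + term q t.
  move=> q t ts; rewrite /D /term /Y (Ystep _ _ S s q t i0 ts) filt_add.
  set i := nth i0 (s q) t.
  case Kq: (K q i) => /=.
    rewrite mulr0 addr0.
    have := @submod_marg R n k g q i (filt K (prefix_tuple S q (s q) t))
      (prefix_tuple S q (s q) t) gs
      (kdisj_sub _ _ S _ dS (fun r => Ysub _ _ S s q t r (hs q).2)) (filt_sub _ _ K _)
      (fun r => Yfresh _ _ S s q t r i0 dS (hs q).1 (hs q).2 ts).
    rewrite /kmarg /kadd; lra.
  rewrite mulr1 /kmarg /kadd; lra.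
have inner : forall q t, (t <= size (s q))%N -> D q t <= D q 0 + \sum_(0 <= j < t) term q j.
  move=> q; elim=> [|t IH] ts; first by rewrite big_geq // addr0.
  rewrite big_nat_recr //=; have := step q t ts; have := IH (ltnW ts); lra.
have outer : forall m (Hm : (m < k)%N), D (Ordinal Hm) 0 <= \sum_(q : 'I_k | (q < m)%N) T q.
  elim=> [|m IH] Hm.
    by rewrite big_pred0 // /D /Y Yzero // filt_empty subrr.
  have Hm' : (m < k)%N := ltnW Hm.
  have hb := Ybound n k S s (Ordinal Hm') (Ordinal Hm) (hs _).2 erefl.
  have := inner (Ordinal Hm') _ (leqnn _); have := IH Hm'.
  rewrite sum_succ /D /Y /T hb; lra.
have Hl : (k.-1 < k)%N by lia.
have h2 := inner (Ordinal Hl) _ (leqnn _); have h1 := outer k.-1 Hl.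
rewrite (bigD1 (Ordinal Hl)) //=.
rewrite (eq_bigl (fun q : 'I_k => (q < k.-1)%N)); last first.
  move=> q /=; rewrite -val_eqE /=; have := ltn_ord q; lia.
move: h1 h2; rewrite /D /Y /= Ylast //; last exact: (hs _).2.
rewrite /T /term /Y /=; lra.
Qed.

Lemma kempty_feas n k (D : 'I_k -> nat) (xi : 'I_n -> bool) (x : 'I_k -> 'I_n -> bool) :
  follower_feasible D xi x (kempty n k).
Proof.
apply/andP; split; first (apply/andP; split).
- by apply/kdisjP => r r' j _; rewrite ffunE inE.
- by apply/forallP => q; apply/forallP => i; rewrite ffunE inE.
- by apply/forallP => q; rewrite ffunE cards0.
Qed.

Lemma Qval_ge (R : realFieldType) n k (D : 'I_k -> nat) (xi : 'I_n -> bool)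
  (f : ktuple n k -> R) x S :
  follower_feasible D xi x S -> f S <= Qval D xi f x.
Proof. by move=> h; rewrite /Qval; apply: le_bigmax_cond. Qed.

Lemma Qval_opt (R : realFieldType) n k (D : 'I_k -> nat) (xi : 'I_n -> bool)
  (f : ktuple n k -> R) x S :
  optimal D xi f x S -> Qval D xi f x = f S.
Proof.
case=> fS hS; apply/le_anti/andP; split; last exact: Qval_ge.
rewrite /Qval; apply: bigmax_le; first exact/hS/kempty_feas.
by move=> S' /hS.
Qed.

Theorem theorem3 (R : realFieldType) (n k : nat) (Omega : finType)
  (p : Omega -> R) (xi : Omega -> 'I_n -> bool)
  (f : Omega -> ktuple n k -> R) (A D : 'I_k -> nat)
  (xhat : 'I_k -> 'I_n -> bool) (Shat : Omega -> ktuple n k)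
  (ord : Omega -> 'I_k -> seq 'I_n) :
  (0 < n)%N -> (0 < k)%N ->
  (forall w, 0 <= p w) -> \sum_(w : Omega) p w = 1 ->
  (forall w, ksubmodular (f w)) -> (forall w, kmonotone (f w)) ->
  attack_feasible A xhat ->
  (forall w, optimal D (xi w) (f w) xhat (Shat w)) ->
  (forall w q, uniq (ord w q) /\ [set i in ord w q] = Shat w q) ->
  forall x : 'I_k -> 'I_n -> bool, attack_feasible A x ->
  PhiN p D xi f xhat -
    \sum_(q : 'I_k) \sum_(w : Omega) \sum_(t < size (ord w q))
      (let i := tnth (in_tuple (ord w q)) t in
       p w * kmarg (f w) q i (prefix_tuple (Shat w) q (ord w q) t)
           * (xi w i)%:R * (x q i)%:R)
  <= PhiN p D xi f x.
Proof.
move=> n0 k0 p0 p1 fsub fmon _ opt hord x _.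
pose i0 : 'I_n := Ordinal n0.
rewrite exchange_big /PhiN -sumrB; apply: ler_sum => w _.
have E : \sum_(q : 'I_k) \sum_(t < size (ord w q))
      (let i := tnth (in_tuple (ord w q)) t in
       p w * kmarg (f w) q i (prefix_tuple (Shat w) q (ord w q) t)
           * (xi w i)%:R * (x q i)%:R)
   = p w * \sum_(q : 'I_k) \sum_(0 <= j < size (ord w q))
      kmarg (f w) q (nth i0 (ord w q) j) (prefix_tuple (Shat w) q (ord w q) j)
      * (~~ ~~ (x q (nth i0 (ord w q) j) && xi w (nth i0 (ord w q) j)))%:R.
  rewrite mulr_sumr; apply: eq_bigr => q _; rewrite big_mkord mulr_sumr.
  apply: eq_bigr => t _ /=; rewrite (tnth_nth i0) /= negbK.
  case: (x q _); case: (xi w _); rewrite /= ?mulr1 ?mulr0 ?mul0r //; by rewrite mulrA.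
rewrite E -mulrBr; apply: ler_wpM2l; first exact: p0.
have [fS hS] := opt w.
set K := fun q i => ~~ (x q i && xi w i).
have sc := scen _ _ _ (f w) (Shat w) (ord w) K i0 k0 (fsub w)
  (proj1 (andP (proj1 (andP fS)))) (hord w).
have feas : follower_feasible D (xi w) x (filt K (Shat w)).
  move: fS => /andP[/andP[dS _] /forallP cS].
  apply/andP; split; first (apply/andP; split).
  - exact: (kdisj_sub _ _ _ _ dS (filt_sub _ _ K _)).
  - apply/forallP => q; apply/forallP => i; apply/implyP.
    by rewrite ffunE inE => /andP[_].
  - apply/forallP => q; apply: leq_trans (cS q).
    exact/subset_leq_card/filt_sub.
have hQ := Qval_ge R _ _ _ _ (f w) _ _ feas; rewrite (Qval_opt _ _ _ _ _ _ _ _ (opt w)).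
move: sc hQ; rewrite /K /=.
set a := f w (Shat w); set b := f w (filt _ _); set c := \sum_(q < k) _.
set d := Qval _ _ _ _ => h1 h2; lra.
Qed.
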